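(* For $\epsilon,\delta\ge 0$ and a set $X$, let $\mathsf{DPR}(\epsilon,\delta)(X)$ be the set $D X$ with the relation $\mu\sim\nu$ iff for all $S\subseteq X$, $\mu(S)\le e^{\epsilon}\nu(S)+\delta$ and $\nu(S)\le e^{\epsilon}\mu(S)+\delta$. Then $\mathsf{DPR}$, viewed as a map $\mathbb{R}_{\ge0}\times\mathbb{R}_{\ge0}\to\mathbf{Ord}(q,D)$, is an $(\mathbb{R}^+_{\ge0}\times\mathbb{R}^+_{\ge0})$-graded $\times$-parameterized assignment of $\mathsf{RSRel}$ on the distribution monad $\mathcal{D}$. Concretely: $\mathsf{DPR}$ is monotone (if $\epsilon\le\epsilon'$, $\delta\le\delta'$ then $\mu\sim_{\mathsf{DPR}(\epsilon,\delta)(X)}\nu$ implies $\mu\sim_{\mathsf{DPR}(\epsilon',\delta')(X)}\nu$), and for all sets $X,Y$, all $\epsilon,\delta,\epsilon',\delta'\ge0$, all $f,g:X\to D Y$ with $f(x)\sim_{\mathsf{DPR}(\epsilon',\delta')(Y)}g(x)$ for every $x\in X$, and all $\mu\sim_{\mathsf{DPR}(\epsilon,\delta)(X)}\nu$, we have $f^\dagger(\mu)\sim_{\mathsf{DPR}(\epsilon+\epsilon',\delta+\delta')(Y)}g^\dagger(\nu)$.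
   Context: $D X$ is the set of discrete probability distributions on $X$ (functions $\mu:X\to[0,1]$ with countable support summing to $1$), $\mu(S)=\sum_{x\in S}\mu(x)$, and for $f:X\to D Y$, $f^\dagger(\mu)(y)=\sum_x f(x)(y)\mu(x)$. $\mathsf{RSRel}$ is the category whose objects are sets with a reflexive symmetric relation and whose morphisms are relation-preserving functions; $q:\mathsf{RSRel}\to\mathsf{Set}$ is the forgetful functor. $\mathbf{Ord}(q,D)$ is the class of maps assigning to each set $X$ a reflexive symmetric relation on $D X$. $\mathbb{R}^+_{\ge0}$ is the additive monoid of nonnegative reals with the usual order, and the product monoid is ordered componentwise. In $\mathsf{RSRel}$ (with product $(x,y)\sim(x',y')$ iff $x\sim x'$ and $y\sim y'$), for a set $X$ and object $Z$, $X\dot\pitchfork Z$ is the set of functions $X\to|Z|$ with $h\sim h'$ iff $h(x)\sim h'(x)$ for all $x$; a graded $\times$-parameterized assignment $\Delta$ requires that $(h,\mu)\mapsto h^\dagger(\mu)$ be relation-preserving $(X\dot\pitchfork\Delta\alpha Y)\times\Delta\beta X\to\Delta(\beta\cdot\alpha)Y$ for all grades, with $\Delta$ monotone in the grade. *)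

(* Defs.v *)
From mathcomp Require Import all_boot all_order all_algebra.
From mathcomp Require Import all_classical all_reals all_analysis.
Set Implicit Arguments. Unset Strict Implicit. Unset Printing Implicit Defensive.
Import Order.TTheory GRing.Theory Num.Theory.
Local Open Scope classical_set_scope.
Local Open Scope ring_scope.

Definition mass (R : realType) (X : Type) (mu : X -> R) (S : set X) : \bar R :=
  esum (S : set {classic X}) (fun x => (mu x)%:E).

Definition is_distr (R : realType) (X : Type) (mu : X -> R) : Prop :=
  (forall x, 0 <= mu x <= 1) /\
  countable [set x | mu x != 0] /\
  mass mu setT = 1%E.

Definition kbind (R : realType) (X Y : Type) (f : X -> Y -> R) (mu : X -> R)
  : Y -> R :=
  fun y => fine (esum (setT : set {classic X}) (fun x => (f x y * mu x)%:E)).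

Definition DPR (R : realType) (eps delta : R) (X : Type) (mu nu : X -> R) : Prop :=
  forall S : set X,
    (mass mu S <= (expR eps)%:E * mass nu S + delta%:E)%E /\
    (mass nu S <= (expR eps)%:E * mass mu S + delta%:E)%E.

(* Main.v *)
Require Import Defs.
From mathcomp Require Import all_boot all_order all_algebra.
From mathcomp Require Import all_classical all_reals all_analysis.
From mathcomp Require Import ring lra.
Import Order.TTheory GRing.Theory Num.Theory.
Local Open Scope ring_scope.

Section H.
Variable R : realType.
Local Open Scope classical_set_scope.
Local Open Scope ring_scope.
Local Open Scope ereal_scope.

Lemma esumZl (T : choiceType) (S : set T) (a : T -> \bar R) (c : R) :
  (0 <= c)%R -> (forall i, S i -> 0 <= a i) ->
  esum S (fun i => c%:E * a i) = c%:E * esum S a.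
Proof.
move=> c0 a0; rewrite /esum -ereal_supZl //; last first.
  by apply/set0P; exists 0; exists set0; [exact: fsets_set0|rewrite fsbig_set0].
congr ereal_sup; apply/seteqP; split => x.
- move=> [A [finA AS] <-]; exists (\sum_(i \in A) a i); first by exists A.
  rewrite !fsbig_finite// big_seq [in RHS]big_seq ge0_sume_distrr// => i.
  by rewrite in_fset_set// inE => /AS /a0.
- move=> [y [A [finA AS] <-] <-]; exists A => //.
  rewrite !fsbig_finite// big_seq [in RHS]big_seq ge0_sume_distrr// => i.
  by rewrite in_fset_set// inE => /AS /a0.
Qed.

Lemma esum_le_setT (T : choiceType) (S : set T) (a : T -> \bar R) :
  (forall i, 0 <= a i) -> esum S a <= esum setT a.
Proof.
move=> a0; rewrite esum_mkcond; apply: le_esum => i _.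
by case: ifP.
Qed.

Lemma keyD (T : choiceType) (mu nu h : T -> R) (c d : R) :
  (0 <= c)%R ->
  (forall x, 0 <= mu x)%R -> (forall x, 0 <= nu x)%R ->
  (forall x, 0 <= h x <= 1)%R ->
  (forall S, esum S (fun x => (nu x)%:E) \is a fin_num) ->
  (forall S, esum S (fun x => (mu x)%:E) <= c%:E * esum S (fun x => (nu x)%:E) + d%:E) ->
  esum setT (fun x => (mu x * h x)%:E) <=
    c%:E * esum setT (fun x => (nu x * h x)%:E) + d%:E.
Proof.
move=> c0 mu0 nu0 h01 nufin hS.
pose P := [set x | (c * nu x < mu x)%R].
have E1 : esum setT (fun x => (mu x * h x)%:E) <=
   esum setT (fun x => c%:E * (nu x * h x)%:E +
      (if x \in P then (mu x - c * nu x)%:E else 0)).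
  apply: le_esum => x _; have /andP[h0 h1] := h01 x.
  case: ifPn => xP.
    rewrite -EFinM -EFinD lee_fin.
    have : (c * nu x < mu x)%R by exact: set_mem xP.
    nra.
  have : ~ (c * nu x < mu x)%R by move=> H; apply: (negP xP); exact: mem_set.
  move=> /negP; rewrite -leNgt => H.
  rewrite adde0 -EFinM lee_fin; nra.
apply: (le_trans E1); rewrite esumD; last 2 first.
- move=> x _; rewrite -EFinM lee_fin; have /andP[h0 _] := h01 x.
  by apply: mulr_ge0 => //; apply: mulr_ge0.
- move=> x _; case: ifPn => // xP; rewrite lee_fin subr_ge0; apply: ltW.
  exact: set_mem xP.
rewrite esumZl //; last first.
  move=> x _; rewrite lee_fin; have /andP[h0 _] := h01 x; exact: mulr_ge0.
rewrite leeD2lE; last first.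
  apply: fin_numM => //.
  have F := nufin setT; rewrite ge0_fin_numE; last first.
    apply: esum_ge0 => x _; rewrite lee_fin; have /andP[h0 _] := h01 x.
    exact: mulr_ge0.
  apply: (@le_lt_trans _ _ (esum setT (fun x => (nu x)%:E))); last first.
    by move: F; rewrite fin_numE => /andP[_ /eqP H]; rewrite ltey; apply/eqP.
  apply: le_esum => x _; rewrite lee_fin; have /andP[h0 h1] := h01 x.
  have := nu0 x; nra.
rewrite -esum_mkcond.
have E2 : esum P (fun x => (mu x)%:E) =
   c%:E * esum P (fun x => (nu x)%:E) + esum P (fun x => (mu x - c * nu x)%:E).
  rewrite -esumZl //; last by move=> x _; rewrite lee_fin.
  rewrite -esumD; last 2 first.
  - by move=> x _; rewrite -EFinM lee_fin; apply: mulr_ge0.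
  - by move=> x Px; rewrite lee_fin subr_ge0; apply: ltW.
  by apply: eq_esum => x _; rewrite -EFinM -EFinD; congr EFin; ring.
have := hS P; rewrite E2 leeD2lE //.
exact: fin_numM.
Qed.

Lemma esum_swap (T1 T2 : choiceType) (A : set T1) (B : set T2)
  (a : T1 -> T2 -> \bar R) : (forall i j, 0 <= a i j) ->
  esum A (fun i => esum B (fun j => a i j)) =
  esum B (fun j => esum A (fun i => a i j)).
Proof.
move=> a0; rewrite (esum_esum (J := fun _ => B)) // (esum_esum (J := fun _ => A)) //.
rewrite (reindex_esum (B `*`` fun _ => A) (A `*`` fun _ => B)
   (fun k : T2 * T1 => (k.2, k.1))) //.
split.
- by move=> [j i] [/= Bj Ai].
- by move=> [j i] [j' i'] _ _ [-> ->].
- by move=> [i j] [/= Ai Bj]; exists (j, i).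
Qed.

Lemma distr_mass01 (X : Type) (mu : X -> R) : is_distr mu ->
  forall S, 0 <= mass mu S <= 1.
Proof.
move=> [mu01 [_ mu1]] S; apply/andP; split.
  by apply: esum_ge0 => x _; rewrite lee_fin; have /andP[] := mu01 x.
rewrite -mu1; apply: (@esum_le_setT {classic X}) => x.
by rewrite lee_fin; have /andP[] := mu01 x.
Qed.

Lemma fin01 (x : \bar R) : 0 <= x <= 1 -> x \is a fin_num.
Proof.
move=> /andP[x0 x1]; rewrite ge0_fin_numE //; exact: (le_lt_trans x1 (ltry _)).
Qed.

Lemma kbindE (X Y : Type) (f : X -> Y -> R) (mu : X -> R) :
  is_distr mu -> (forall x, is_distr (f x)) -> forall y,
  (kbind f mu y)%:E = esum setT (fun x : {classic X} => (f x y * mu x)%:E).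
Proof.
move=> hmu hf y; rewrite /kbind fineK //; apply: fin01; apply/andP; split.
  apply: esum_ge0 => x _; rewrite lee_fin.
  have [f01 _] := hf x; have /andP[? _] := f01 y.
  have [mu01 _] := hmu; have /andP[? _] := mu01 x; exact: mulr_ge0.
have [_ [_ <-]] := hmu; apply: le_esum => x _; rewrite lee_fin.
have [f01 _] := hf x; have /andP[? ?] := f01 y.
have [mu01 _] := hmu; have /andP[? _] := mu01 x; nra.
Qed.

Lemma mass_kbind (X Y : Type) (f : X -> Y -> R) (mu : X -> R) S :
  is_distr mu -> (forall x, is_distr (f x)) ->
  mass (kbind f mu) S =
  esum setT (fun x : {classic X} => (mu x)%:E * mass (f x) S).
Proof.
move=> hmu hf; rewrite /mass.
rewrite (eq_esum (b := fun y : {classic Y} => esum setT (fun x : {classic X} => (f x y * mu x)%:E))); last first.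
  by move=> y _; rewrite kbindE.
rewrite esum_swap; last first.
  move=> y x; rewrite lee_fin.
  have [f01 _] := hf x; have /andP[? _] := f01 y.
  have [mu01 _] := hmu; have /andP[? _] := mu01 x; exact: mulr_ge0.
apply: eq_esum => x _; rewrite -esumZl; last first.
- by move=> y _; rewrite lee_fin; have [f01 _] := hf x; have /andP[] := f01 y.
- by have [mu01 _] := hmu; have /andP[] := mu01 x.
by apply: eq_esum => y _; rewrite -EFinM mulrC.
Qed.

Lemma dir (X Y : Type) (eps delta eps' delta' : R)
      (f g : X -> Y -> R) (mu nu : X -> R) :
  (0 <= delta')%R ->
  (forall x, is_distr (f x)) -> (forall x, is_distr (g x)) ->
  (forall x S, mass (f x) S <= (expR eps')%:E * mass (g x) S + delta'%:E) ->
  is_distr mu -> is_distr nu ->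
  (forall S, mass mu S <= (expR eps)%:E * mass nu S + delta%:E) ->
  forall S, mass (kbind f mu) S <=
     (expR (eps + eps'))%:E * mass (kbind g nu) S + (delta + delta')%:E.
Proof.
move=> d'0 hf hg hfg hmu hnu hmn S.
rewrite !mass_kbind //.
pose F x := fine (mass (f x) S); pose G x := fine (mass (g x) S).
have FE x : (F x)%:E = mass (f x) S by rewrite /F fineK //; apply/fin01/distr_mass01.
have GE x : (G x)%:E = mass (g x) S by rewrite /G fineK //; apply/fin01/distr_mass01.
have F01 x : (0 <= F x <= 1)%R by rewrite -!lee_fin FE; exact: distr_mass01.
have G01 x : (0 <= G x <= 1)%R by rewrite -!lee_fin GE; exact: distr_mass01.
have FG x : (F x <= expR eps' * G x + delta')%R.
  by rewrite -lee_fin EFinD EFinM FE GE.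
have [mu01 [_ mu1]] := hmu; have [nu01 [_ nu1]] := hnu.
have mu0 x : (0 <= mu x)%R by have /andP[] := mu01 x.
have nu0 x : (0 <= nu x)%R by have /andP[] := nu01 x.
pose H x := Num.min 1%R (expR eps' * G x)%R.
have H01 x : (0 <= H x <= 1)%R.
  have /andP[g0 _] := G01 x; have := expR_ge0 eps'.
  rewrite /H; case: (leP 1%R (expR eps' * G x)%R) => h e0; first by rewrite ler01 lexx.
  by rewrite (ltW h) andbT; apply: mulr_ge0.
have E1 : esum setT (fun x : {classic X} => (mu x)%:E * mass (f x) S) <=
    esum setT (fun x : {classic X} => (mu x * H x)%:E + delta'%:E * (mu x)%:E).
  apply: le_esum => x _; rewrite -FE -!EFinM -EFinD lee_fin.
  suff : (F x <= H x + delta')%R.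
    by move=> h; have := mu0 x; nra.
  have /andP[_ f1] := F01 x; have := FG x.
  rewrite /H; case: (leP 1%R (expR eps' * G x)%R) => _; lra.
apply: (le_trans E1); rewrite esumD; last 2 first.
- by move=> x _; rewrite lee_fin; have /andP[h0 _] := H01 x; exact: mulr_ge0.
- by move=> x _; rewrite lee_fin; exact: mulr_ge0.
rewrite esumZl //; last by move=> x _; rewrite lee_fin.
have -> : esum setT (fun x : {classic X} => (mu x)%:E) = 1 by exact: mu1.
rewrite mule1.
have K := @keyD {classic X} mu nu H (expR eps) delta (expR_ge0 eps) mu0 nu0 H01
   (fun S => fin01 _ (@distr_mass01 X nu hnu S)) hmn.
apply: (le_trans (leeD K (lexx _))).
rewrite -addeA -EFinD leeD2r // expRD EFinM -muleA.
apply: lee_wpmul2l; first by rewrite lee_fin expR_ge0.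
rewrite -esumZl; last 2 first.
- by apply: expR_ge0.
- by move=> x _; rewrite -GE -EFinM lee_fin; apply: mulr_ge0 => //; have /andP[] := G01 x.
apply: le_esum => x _; rewrite -GE -!EFinM lee_fin.
have /andP[g0 _] := G01 x.
rewrite mulrCA; apply: ler_wpM2l => //.
rewrite /H; case: (leP 1%R (expR eps' * G x)%R) => h; lra.
Qed.
End H.

Theorem proposition2 (R : realType) :
  (* monotonicity in the grade *)
  (forall (eps delta eps' delta' : R) (X : Type) (mu nu : X -> R),
      0 <= eps -> 0 <= delta -> eps <= eps' -> delta <= delta' ->
      is_distr mu -> is_distr nu ->
      DPR eps delta mu nu -> DPR eps' delta' mu nu) /\
  (* graded x-parameterized assignment: Kleisli extension preserves relations *)
  (forall (X Y : Type) (eps delta eps' delta' : R)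
          (f g : X -> Y -> R) (mu nu : X -> R),
      0 <= eps -> 0 <= delta -> 0 <= eps' -> 0 <= delta' ->
      (forall x, is_distr (f x)) -> (forall x, is_distr (g x)) ->
      (forall x, DPR eps' delta' (f x) (g x)) ->
      is_distr mu -> is_distr nu ->
      DPR eps delta mu nu ->
      DPR (eps + eps') (delta + delta') (kbind f mu) (kbind g nu)).
Proof.
split.
  move=> eps delta eps' delta' X mu nu _ _ ee dd hmu hnu H S.
  have [H1 H2] := H S.
  have /andP[n0 _] := @distr_mass01 R X nu hnu S.
  have /andP[m0 _] := @distr_mass01 R X mu hmu S.
  have le1 : forall m : \bar R, (0 <= m)%E ->
      ((expR eps)%:E * m + delta%:E <= (expR eps')%:E * m + delta'%:E)%E.
    move=> m m0'; apply: leeD; last by rewrite lee_fin.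
    by apply: lee_wpmul2r => //; rewrite lee_fin ler_expR.
  by split; [exact: (le_trans H1 (le1 _ n0)) | exact: (le_trans H2 (le1 _ m0))].
move=> X Y eps delta eps' delta' f g mu nu _ _ _ d'0 hf hg hfg hmu hnu H S.
split.
  apply: (@dir R) => //; first by move=> x S'; have [] := hfg x S'.
  by move=> S'; have [] := H S'.
apply: (@dir R) => //; first by move=> x S'; have [] := hfg x S'.
by move=> S'; have [] := H S'.
Qed.
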